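(* Let $\mathcal{X}' := \mathcal{X}\times\mathcal{X}^{|\mathcal{N}|}$, let $\Phi:\mathcal{X}'\to\mathcal{R}$ be a one-to-one (invertible) representation function with inverse $\Psi:\mathcal{R}\to\mathcal{X}'$, and write $r=\Phi(\mathbf{x})$. Let $h:\mathcal{R}\times\{0,1\}\times[0,1]\to\mathcal{Y}$ be a hypothesis and $L:\mathcal{Y}\times\mathcal{Y}\to\mathbb{R}_+$ a loss function. Let $w_\eta$ be a weight function and $q_\eta(\mathbf{x}\mid t,z)$ the associated reweighted distribution (see context). Let $G$ be a family of real-valued functions on $\mathcal{R}\times\{0,1\}\times[0,1]$, and assume there is a constant $B_\Phi>0$ such that the function $(r,t,z)\mapsto \frac{1}{B_\Phi}\,\ell_{h,\Phi}(\Psi(r),t,z)$ belongs to $G$. Then $$\epsilon_{CF}\le \epsilon_F^{\eta}+B_\Phi\cdot \mathrm{IPM}_G\big(p_\Phi(r)\,p(t,z),\; q_{\Phi,\eta}(r\mid t,z)\,p(t,z)\big),$$ where $p_\Phi(r)$ and $q_{\Phi,\eta}(r\mid t,z)$ are the distributions of $r=\Phi(\mathbf{x})$ when $\mathbf{x}\sim p(\mathbf{x})$ and $\mathbf{x}\sim q_\eta(\mathbf{x}\mid t,z)$, respectively.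
   Context: Setting: each unit has a combined feature vector $\mathbf{x}\in\mathcal{X}'=\mathcal{X}\times\mathcal{X}^{|\mathcal{N}|}$ (its own features and its neighbours' features), a binary individual treatment $t\in\{0,1\}$ and a neighbourhood exposure $z\in[0,1]$. There is a joint distribution of $(\mathbf{x},t,z)$ with marginals $p(\mathbf{x})$, $p(t,z)$ and conditionals $p(\mathbf{x}\mid t,z)$. For each $(t,z)$ there is a potential outcome $y(t,z)\in\mathcal{Y}$ with conditional density $p(y(t,z)\mid\mathbf{x})$. Per-unit expected loss: $\ell_{h,\Phi}(\mathbf{x},t,z)=\int_{\mathcal{Y}} L\big(y(t,z),h(\Phi(\mathbf{x}),t,z)\big)\,p(y(t,z)\mid\mathbf{x})\,dy(t,z)$. Factual loss: $\epsilon_F=\mathbb{E}_{p(t,z)}\big[\int \ell_{h,\Phi}(\mathbf{x},t,z)\,p(\mathbf{x}\mid t,z)\,d\mathbf{x}\big]$. Counterfactual loss: $\epsilon_{CF}=\mathbb{E}_{p(t,z)}\Big[\mathbb{E}_{p(t',z')}\big[\int \ell_{h,\Phi}(\mathbf{x},t,z)\,p(\mathbf{x}\mid t',z')\,d\mathbf{x}\big]\Big]$, where $(t',z')$ is an independent copy with distribution $p(t,z)$. Weights: $w_\eta:\{0,1\}\times[0,1]\times\mathcal{X}'\to(0,\infty)$ is a weight function such that for every $(t,z)$ the normalizer $c(t,z)=\int w_\eta(t,z,\mathbf{x})p(\mathbf{x}\mid t,z)d\mathbf{x}$ is finite and positive; the reweighted distribution is $q_\eta(\mathbf{x}\mid t,z)=w_\eta(t,z,\mathbf{x})p(\mathbf{x}\mid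 t,z)/c(t,z)$. Reweighted factual loss: $\epsilon_F^{\eta}=\mathbb{E}_{p(t,z)}\big[\int \ell_{h,\Phi}(\mathbf{x},t,z)\,q_\eta(\mathbf{x}\mid t,z)\,d\mathbf{x}\big]$. Integral probability metric: for distributions $P,Q$ on $\mathcal{R}\times\{0,1\}\times[0,1]$, $\mathrm{IPM}_G(P,Q)=\sup_{g\in G}\left|\int g\,dP-\int g\,dQ\right|$; here $p_\Phi(r)p(t,z)$ is the product distribution and $q_{\Phi,\eta}(r\mid t,z)p(t,z)$ is the joint distribution with $(t,z)\sim p(t,z)$ and then $r\sim q_{\Phi,\eta}(\cdot\mid t,z)$. *)

(* Defs.v *)
From HB Require Import structures.
From mathcomp Require Import all_boot all_order all_algebra.
From mathcomp Require Import all_classical all_reals all_analysis.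
Set Implicit Arguments.
Unset Strict Implicit.
Unset Printing Implicit Defensive.
Import Order.TTheory GRing.Theory Num.Theory.
Local Open Scope classical_set_scope.
Local Open Scope ring_scope.
Local Open Scope ereal_scope.

(* Conventions.
   - The treatment/exposure space {0,1} x [0,1] is represented by the
     measurable type  TZ R := bool * R  (the distribution p(t,z) is assumed
     to be concentrated on bool * [0,1] in the theorem).
   - X' (combined features) , the representation space R_sp and the outcome
     space Y are measurable types.
   - p(t,z)    : PT  : probability (TZ R) R
   - p(x|t,z)  : Px  : probability kernel  TZ ~> X'
   - p(y(t,z)|x) : Py : probability kernel (X' * TZ) ~> Y
   Distributions are handled as (set-function) measures; "density" integrals
   int f(x) p(x|t,z) dx are written as Lebesgue integrals against Px (t,z). *)

Notation TZ R := (bool * R)%type.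

Section defs.
Context {R : realType}.
Context {dX dR dY : measure_display}
  {X : measurableType dX} {Rsp : measurableType dR} {Y : measurableType dY}.

Definition unit_loss (Py : R.-pker (X * TZ R) ~> Y) (L : Y -> Y -> R)
    (h : Rsp * TZ R -> Y) (Phi : X -> Rsp) (x : X) (tz : TZ R) : \bar R :=
  \int[Py (x, tz)]_y (L y (h (Phi x, tz)))%:E.

Definition marginal_x (PT : set (TZ R) -> \bar R) (Px : R.-pker TZ R ~> X)
    : set X -> \bar R :=
  fun A => \int[PT]_tz Px tz A.

Definition wnorm (Px : R.-pker TZ R ~> X) (w : TZ R -> X -> R) (tz : TZ R) : R :=
  fine (\int[Px tz]_x (w tz x)%:E).

Definition reweighted (Px : R.-pker TZ R ~> X) (w : TZ R -> X -> R)
    (tz : TZ R) : set X -> \bar R :=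
  fun A => \int[Px tz]_(x in A) (w tz x / wnorm Px w tz)%:E.

Definition eps_F (PT : set (TZ R) -> \bar R) (Px : R.-pker TZ R ~> X)
    (ell : X -> TZ R -> \bar R) : \bar R :=
  \int[PT]_tz \int[Px tz]_x ell x tz.

(* counterfactual loss epsilon_CF, with (t',z') an independent copy *)
Definition eps_CF (PT : set (TZ R) -> \bar R) (Px : R.-pker TZ R ~> X)
    (ell : X -> TZ R -> \bar R) : \bar R :=
  \int[PT]_tz \int[PT]_tz' \int[Px tz']_x ell x tz.

Definition eps_F_eta (PT : set (TZ R) -> \bar R) (Px : R.-pker TZ R ~> X)
    (w : TZ R -> X -> R) (ell : X -> TZ R -> \bar R) : \bar R :=
  \int[PT]_tz \int[reweighted Px w tz]_x ell x tz.

Definition joint_cond (PT : set (TZ R) -> \bar R)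
    (k : TZ R -> set Rsp -> \bar R) : set (Rsp * TZ R) -> \bar R :=
  fun A => \int[PT]_tz k tz (ysection A tz).

Definition IPM {d} {T : measurableType d} (G : set (T -> R))
    (P Q : set T -> \bar R) : \bar R :=
  ereal_sup [set `| \int[P]_u (g u)%:E - \int[Q]_u (g u)%:E |
             | g in G].

End defs.

(* Main.v *)
Require Import Defs.
From HB Require Import structures.
From mathcomp Require Import all_boot all_order all_algebra.
From mathcomp Require Import all_classical all_reals all_analysis.
From mathcomp Require Import measurable_realfun.
From mathcomp Require Import ring lra.
Import Order.TTheory GRing.Theory Num.Theory.
Local Open Scope classical_set_scope.
Local Open Scope ring_scope.
Local Open Scope ereal_scope.


Lemma arith (R : realType) (a b I : \bar R) (B : R) : (0 < B)%R -> 0 <= a -> 0 <= b ->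
  `|a - b| <= I -> B%:E * a <= B%:E * b + B%:E * I.
Proof.
move=> B0 a0 b0 hI.
have I0 : 0 <= I := le_trans (abse_ge0 _) hI.
case: I hI I0 => [t| |] hI I0 //.
- case: a a0 hI => [s| |] a0 hI //; case: b b0 hI => [r| |] b0 hI //.
  + move: hI; rewrite -EFinB /= lee_fin => hI.
    rewrite -!EFinM -EFinD lee_fin.
    have := ler_norm (s - r)%R.
    nra.
rewrite gt0_muley ?lte_fin // addey ?leey //.
apply/negP => /eqP h.
have : 0 <= B%:E * b by rewrite mule_ge0 // lee_fin ltW.
by rewrite h.
Qed.

Section proof.
Context (R : realType) (dX dR dY : measure_display)
  (X : measurableType dX) (Rsp : measurableType dR) (Y : measurableType dY)
  (PT : probability (TZ R) R)
  (Px : R.-pker TZ R ~> X)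
  (Py : R.-pker (X * TZ R) ~> Y)
  (Phi : X -> Rsp) (Psi : Rsp -> X)
  (h : Rsp * TZ R -> Y) (L : Y -> Y -> R)
  (w : TZ R -> X -> R).
Variable mPhi : measurable_fun setT Phi.
Variable mPsi : measurable_fun setT Psi.
Variable w0 : forall tz x, (0 < w tz x)%R.
Variable mw : measurable_fun setT (fun p : TZ R * X => w p.1 p.2).
Variable wint : forall tz, 0 < \int[Px tz]_x (w tz x)%:E < +oo.

Definition lk : unit -> {measure set (TZ R) -> \bar R} := fun _ => PT.
HB.instance Definition _ := isKernel.Build _ _ unit (TZ R) R lk
  (fun U mU => measurable_cst _).
HB.instance Definition _ := Kernel_isProbability.Build _ _ _ _ _ lk
  (fun _ => @probability_setT _ _ _ PT).

Definition kk : unit * TZ R -> {measure set X -> \bar R} := fun p => Px p.2.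
Lemma kk_meas U : measurable U -> measurable_fun [set: unit * TZ R] (kk ^~ U).
Proof. move=> mU; exact: measurableT_comp (measurable_kernel Px U mU) measurable_snd. Qed.
HB.instance Definition _ := isKernel.Build _ _ _ _ R kk kk_meas.
HB.instance Definition _ := Kernel_isProbability.Build _ _ _ _ _ kk
  (fun p => prob_kernel p.2).

Lemma int_marg f : (forall x, 0 <= f x) -> measurable_fun setT f ->
  \int[marginal_x PT Px]_x f x = \int[PT]_tz \int[Px tz]_x f x.
Proof.
move=> f0 mf.
have -> : marginal_x PT Px = kcomp lk kk tt by [].
by rewrite integral_kcomp.
Qed.

Let marg0 : marginal_x PT Px set0 = 0.
Proof. exact: (measure0 (mkcomp lk kk tt)). Qed.
Let marg_ge0 A : 0 <= marginal_x PT Px A.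
Proof. exact: (measure_ge0 (mkcomp lk kk tt)). Qed.
Let marg_sa : semi_sigma_additive (marginal_x PT Px).
Proof. exact: (@measure_semi_sigma_additive _ _ _ (mkcomp lk kk tt)). Qed.
HB.instance Definition _ := isMeasure.Build _ _ _ (marginal_x PT Px)
  marg0 marg_ge0 marg_sa.
Let marg1 : marginal_x PT Px setT = 1.
Proof.
rewrite /marginal_x (eq_integral (cst 1)); last by move=> tz _; rewrite prob_kernel.
by rewrite integral_cst // mul1e; exact: (@probability_setT _ _ _ PT).
Qed.
HB.instance Definition _ := Measure_isProbability.Build _ _ _ (marginal_x PT Px) marg1.

Definition PhiM : {mfun X >-> Rsp} := HB.pack Phi (isMeasurableFun.Build _ _ _ _ _ mPhi).


Local Notation c := (wnorm Px w).
Definition Iw tz := \int[Px tz]_x (w tz x)%:E.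
Lemma cE tz : (c tz)%:E = Iw tz.
Proof.
have /andP[h1 h2] := wint tz.
by rewrite /wnorm fineK // ge0_fin_numE // ltW.
Qed.
Lemma c_gt0 tz : (0 < c tz)%R.
Proof. by rewrite -lte_fin cE; have /andP[] := wint tz. Qed.

Lemma mw2 tz : measurable_fun setT (w tz).
Proof. exact: (measurable_fun_pair2 (f := fun p : TZ R * X => w p.1 p.2) tz mw). Qed.

Lemma mc : measurable_fun setT c.
Proof.
apply: measurableT_comp (fine_measurable _) _ => //.
apply: (measurable_fun_integral_finite_kernel (fun q : TZ R * X => (w q.1 q.2)%:E) Px).
- by move=> q; rewrite lee_fin ltW.
- exact/measurable_EFinP.
Qed.

Lemma mcinv : measurable_fun setT (fun tz => (c tz)^-1)%R.
Proof.
change (fun tz => (c tz)^-1)%R with (GRing.inv \o c).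
apply: (@measurable_comp _ _ _ _ _ _ [set r : R | r != 0%R]) => //.
- exact: open_measurable.
- by move=> _ [tz _ <-]; exact/lt0r_neq0/c_gt0.
- apply: open_continuous_measurable_fun => //; apply/in_setP => x /= x0.
  exact: inv_continuous.
- exact: mc.
Qed.

Lemma mrewf tz : measurable_fun setT (fun x => (w tz x / c tz)%:E).
Proof.
apply/measurable_EFinP.
exact: (measurable_funM (mw2 tz) (measurable_cst (c tz)^-1%R)).
Qed.
Lemma rewf0 tz x : 0 <= (w tz x / c tz)%:E.
Proof. by rewrite lee_fin divr_ge0 // ltW // c_gt0. Qed.

Section rew.
Variable tz : TZ R.
Let rew0 : reweighted Px w tz set0 = 0.
Proof. exact: integral_set0. Qed.
Let rew_ge0 A : 0 <= reweighted Px w tz A.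
Proof. by apply: integral_ge0 => x _; exact: rewf0. Qed.
Let rew_sa : semi_sigma_additive (reweighted Px w tz).
Proof.
move=> F mF tF mUF; rewrite /reweighted ge0_integral_bigcup //.
- apply: is_cvg_ereal_nneg_natsum_cond => n _ _; apply: integral_ge0 => x _; exact: rewf0.
- exact: measurable_funTS (mrewf tz).
- by move=> x _; exact: rewf0.
Qed.
HB.instance Definition _ := isMeasure.Build _ _ _ (reweighted Px w tz)
  rew0 rew_ge0 rew_sa.
Let rew1 : reweighted Px w tz setT = 1.
Proof.
rewrite /reweighted.
under eq_integral do rewrite EFinM.
rewrite ge0_integralZr //.
- by rewrite -/(Iw tz) -cE -EFinM divff // gt_eqF // c_gt0.
- exact/measurable_EFinP/mw2.
- by move=> x _; rewrite lee_fin ltW.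
- by rewrite lee_fin invr_ge0 ltW // c_gt0.
Qed.
HB.instance Definition _ := Measure_isProbability.Build _ _ _ (reweighted Px w tz) rew1.
End rew.

Lemma mpair (tz : TZ R) : measurable_fun setT (fun x => (Phi x, tz)).
Proof. exact: measurable_fun_pair mPhi (measurable_cst _). Qed.

Definition pairf (p : unit * TZ R) := fun x => (Phi x, p.2).
HB.instance Definition _ p := isMeasurableFun.Build _ _ _ _ (pairf p) (mpair p.2).

Definition k2 : unit * TZ R -> {measure set (Rsp * TZ R) -> \bar R} :=
  fun p => distribution (reweighted Px w p.2) (pairf p).

Lemma k2_meas U : measurable U -> measurable_fun [set: unit * TZ R] (k2 ^~ U).
Proof.
move=> mU.
pose F := fun q : TZ R * X => ((w q.1 q.2 / c q.1) * \1_U (Phi q.2, q.1))%:E.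
have mF : measurable_fun setT F.
  apply/measurable_EFinP; apply: measurable_funM.
    apply: measurable_funM => //.
    exact: measurableT_comp mcinv measurable_fst.
  apply: measurableT_comp (measurable_indic mU) _.
  exact: measurable_fun_pair (measurableT_comp mPhi measurable_snd) measurable_fst.
have F0 q : 0 <= F q by rewrite lee_fin mulr_ge0 // divr_ge0 // ltW // c_gt0.
have -> : k2 ^~ U = (fun tz => \int[Px tz]_x F (tz, x)) \o snd.
  apply/funext => -[u tz] /=.
  rewrite /k2 /distribution /pushforward /reweighted /=.
  have mS : measurable ((fun x => (Phi x, tz)) @^-1` U).
    by rewrite -[X in measurable X]setTI; exact: mpair.
  rewrite -[X in \int[_]_(_ in X) _]setTI __deprecated__integral_setI_indic //.
apply: measurableT_comp measurable_snd.
exact: (measurable_fun_integral_finite_kernel F Px F0 mF).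
Qed.
HB.instance Definition _ := isKernel.Build _ _ _ _ R k2 k2_meas.
HB.instance Definition _ := Kernel_isProbability.Build _ _ _ _ _ k2
  (fun p => @probability_setT _ _ _ (k2 p)).

Lemma int_Q f : (forall z, 0 <= f z) -> measurable_fun setT f ->
  \int[joint_cond PT (fun tz => pushforward (reweighted Px w tz) Phi)]_z f z =
  \int[PT]_tz \int[reweighted Px w tz]_x f (Phi x, tz).
Proof.
move=> f0 mf.
have -> : joint_cond PT (fun tz => pushforward (reweighted Px w tz) Phi) = kcomp lk k2 tt.
  apply/funext => A; rewrite /joint_cond /kcomp /=.
  apply: eq_integral => tz _; rewrite /k2 /distribution /pushforward /=.
  congr (reweighted Px w tz _); apply/funext => x /=.
  by rewrite /ysection /= in_setE.
rewrite integral_kcomp //; apply: eq_integral => tz _.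
by rewrite /k2 ge0_integral_distribution.
Qed.

Variable hPP : cancel Phi Psi.
Variable mh : measurable_fun setT h.
Variable L0 : forall y y', (0 <= L y y')%R.
Variable mL : measurable_fun setT (fun yy : Y * Y => L yy.1 yy.2).
Variable B : R.
Variable B0 : (0 < B)%R.
Variable g : Rsp * TZ R -> R.
Variable hg : forall r tz, unit_loss Py L h Phi (Psi r) tz = (B * g (r, tz))%:E.

Local Notation ell := (unit_loss Py L h Phi).
Let gE := fun p => (g p)%:E.

Lemma ell_ge0 x tz : 0 <= ell x tz.
Proof. by apply: integral_ge0 => y _; rewrite lee_fin. Qed.

Lemma mell : measurable_fun setT (fun p : X * TZ R => ell p.1 p.2).
Proof.
have := measurable_fun_integral_finite_kernel
  (fun q : (X * TZ R) * Y => (L q.2 (h (Phi q.1.1, q.1.2)))%:E) Py _ _.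
have -> : (fun x : X * TZ R => \int[Py x]_y (fun q : (X * TZ R) * Y => (L q.2 (h (Phi q.1.1, q.1.2)))%:E) (x, y))
   = (fun p : X * TZ R => ell p.1 p.2) by apply/funext => -[].
apply.
- by move=> q; rewrite lee_fin.
- apply/measurable_EFinP.
  apply: (measurableT_comp (f := fun yy : Y * Y => L yy.1 yy.2)
    (g := fun q : (X * TZ R) * Y => (q.2, h (Phi q.1.1, q.1.2))) mL).
  apply: measurable_fun_pair; first exact: measurable_snd.
  apply: measurableT_comp mh _.
  apply: measurable_fun_pair.
    exact: measurableT_comp mPhi (measurableT_comp measurable_fst measurable_fst).
  exact: measurableT_comp measurable_snd measurable_fst.
Qed.

Lemma gEE p : gE p = (B^-1)%:E * ell (Psi p.1) p.2.
Proof.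
case: p => r tz; rewrite hg /gE -EFinM mulrA mulVf ?mul1r //.
by rewrite gt_eqF.
Qed.

Lemma mg : measurable_fun setT gE.
Proof.
rewrite (_ : gE = fun p => (B^-1)%:E * ell (Psi p.1) p.2); last first.
  by apply/funext => p; rewrite gEE.
apply: measurable_funeM.
apply: (measurableT_comp (f := fun p : X * TZ R => ell p.1 p.2)
  (g := fun p : Rsp * TZ R => (Psi p.1, p.2)) mell).
apply: measurable_fun_pair; last exact: measurable_snd.
exact: measurableT_comp mPsi measurable_fst.
Qed.

Lemma g0 p : 0 <= gE p.
Proof. by rewrite gEE mule_ge0 ?ell_ge0 // lee_fin invr_ge0 ltW. Qed.

Lemma ellE x tz : ell x tz = B%:E * gE (Phi x, tz).
Proof. by rewrite -{1}(hPP x) hg EFinM. Qed.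

Lemma mgPhi tz : measurable_fun setT (fun x => gE (Phi x, tz)).
Proof.
apply: (measurableT_comp (f := fun r => gE (r, tz)) (g := Phi)) => //.
exact: (measurable_fun_pair1 (f := gE) tz mg).
Qed.

Lemma Keq tz : fubini_G (distribution (marginal_x PT Px) PhiM) gE tz =
  \int[PT]_tz' \int[Px tz']_x gE (Phi x, tz).
Proof.
have m1 : measurable_fun setT (fun r => gE (r, tz)).
  exact: (measurable_fun_pair1 (f := gE) tz mg).
have h1 : forall r, 0 <= gE (r, tz) by move=> r; exact: g0.
rewrite /fubini_G (ge0_integral_distribution _ m1 h1).
transitivity (\int[marginal_x PT Px]_x gE (Phi x, tz)); first by [].
apply: int_marg.
- by move=> x; exact: g0.
- exact: mgPhi.
Qed.

Lemma intP : \int[pushforward (marginal_x PT Px) Phi \x PT]_z gE z =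
  \int[PT]_tz \int[PT]_tz' \int[Px tz']_x gE (Phi x, tz).
Proof.
rewrite [X in X \x _](_ : _ = distribution (marginal_x PT Px) PhiM) //.
rewrite (fubini_tonelli2 gE mg g0).
by apply: eq_integral => tz _; rewrite Keq.
Qed.

Lemma epsCF : eps_CF PT Px ell =
  B%:E * \int[pushforward (marginal_x PT Px) Phi \x PT]_z gE z.
Proof.
rewrite intP /eps_CF.
have mK : measurable_fun setT (fun tz => \int[PT]_tz' \int[Px tz']_x gE (Phi x, tz)).
  rewrite (_ : (fun tz => _) = fubini_G (distribution (marginal_x PT Px) PhiM) gE).
    exact: measurable_fun_fubini_tonelli_G mg g0.
  by apply/funext => tz; rewrite Keq.
rewrite -ge0_integralZl //; last 2 first.
- by move=> tz _; apply: integral_ge0 => tz' _; apply: integral_ge0 => x _; exact: g0.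
- by rewrite lee_fin ltW.
apply: eq_integral => tz _.
have mH : measurable_fun setT (fun tz' => \int[Px tz']_x gE (Phi x, tz)).
  apply: (measurable_fun_integral_kernel (l := Px)).
  - by move=> U mU; exact: measurable_kernel.
  - by move=> x; exact: g0.
  - exact: mgPhi.
rewrite -ge0_integralZl //; last 2 first.
- by move=> tz' _; apply: integral_ge0 => x _; exact: g0.
- by rewrite lee_fin ltW.
apply: eq_integral => tz' _.
rewrite -ge0_integralZl //; last 3 first.
- exact: mgPhi.
- by move=> x _; exact: g0.
- by rewrite lee_fin ltW.
by apply: eq_integral => x _; rewrite ellE.
Qed.

Lemma epsF : eps_F_eta PT Px w ell =
  B%:E * \int[joint_cond PT (fun tz => pushforward (reweighted Px w tz) Phi)]_z gE z.
Proof.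
rewrite int_Q //; last 2 first.
- exact: g0.
- exact: mg.
rewrite /eps_F_eta.
have mK : measurable_fun setT (fun tz => \int[reweighted Px w tz]_x gE (Phi x, tz)).
  rewrite (_ : (fun tz => _) = fun tz => \int[k2 (tt, tz)]_z gE z).
    apply: (measurable_fun_integral_kernel (l := fun tz => k2 (tt, tz))).
    - move=> U mU.
      apply: (measurableT_comp (f := k2 ^~ U) (g := pair tt)).
        exact: k2_meas.
      exact: pair1_measurable.
    - exact: g0.
    - exact: mg.
  apply/funext => tz; rewrite /k2 ge0_integral_distribution //.
  - exact: mg.
  - exact: g0.
rewrite -ge0_integralZl //; last 2 first.
- by move=> tz _; apply: integral_ge0 => x _; exact: g0.
- by rewrite lee_fin ltW.
apply: eq_integral => tz _.
rewrite -ge0_integralZl //; last 3 first.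
- exact: mgPhi.
- by move=> x _; exact: g0.
- by rewrite lee_fin ltW.
by apply: eq_integral => x _; rewrite ellE.
Qed.

Lemma final (G : set (Rsp * TZ R -> R)) : G g ->
  eps_CF PT Px ell
  <= eps_F_eta PT Px w ell
     + B%:E * IPM G (pushforward (marginal_x PT Px) Phi \x PT)
                    (joint_cond PT (fun tz => pushforward (reweighted Px w tz) Phi)).
Proof.
move=> Gg; rewrite epsCF epsF.
have hI : `| \int[pushforward (marginal_x PT Px) Phi \x PT]_u gE u -
   \int[joint_cond PT (fun tz => pushforward (reweighted Px w tz) Phi)]_u gE u |
   <= IPM G (pushforward (marginal_x PT Px) Phi \x PT)
                    (joint_cond PT (fun tz => pushforward (reweighted Px w tz) Phi)).
  rewrite /IPM; apply: ereal_sup_ubound; by exists g.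
apply: arith => //.
- rewrite intP; apply: integral_ge0 => tz _; apply: integral_ge0 => tz' _.
  by apply: integral_ge0 => x _; exact: g0.
- rewrite int_Q; [|exact: g0|exact: mg].
  apply: integral_ge0 => tz _; apply: integral_ge0 => x _; exact: g0.
Qed.
End proof.

Theorem lemma1 (R : realType) (dX dR dY : measure_display)
  (X : measurableType dX) (Rsp : measurableType dR) (Y : measurableType dY)
  (PT : probability (TZ R) R)
  (Px : R.-pker TZ R ~> X)
  (Py : R.-pker (X * TZ R) ~> Y)
  (Phi : X -> Rsp) (Psi : Rsp -> X)
  (h : Rsp * TZ R -> Y) (L : Y -> Y -> R)
  (w : TZ R -> X -> R)
  (G : set (Rsp * TZ R -> R)) (B : R) :
  PT (setT `*` [set z : R | (0 <= z <= 1)%R]) = 1 ->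
  cancel Phi Psi -> cancel Psi Phi ->
  measurable_fun setT Phi -> measurable_fun setT Psi ->
  measurable_fun setT h ->
  (forall y y', (0 <= L y y')%R) ->
  measurable_fun setT (fun yy : Y * Y => L yy.1 yy.2) ->
  (forall tz x, (0 < w tz x)%R) ->
  measurable_fun setT (fun p : TZ R * X => w p.1 p.2) ->
  (forall tz, 0 < \int[Px tz]_x (w tz x)%:E < +oo) ->
  (0 < B)%R ->
  (exists2 g, G g &
     forall r tz, unit_loss Py L h Phi (Psi r) tz = (B * g (r, tz))%:E) ->
  eps_CF PT Px (unit_loss Py L h Phi)
  <= eps_F_eta PT Px w (unit_loss Py L h Phi)
     + B%:E * IPM G (pushforward (marginal_x PT Px) Phi \x PT)
                    (joint_cond PT (fun tz => pushforward (reweighted Px w tz) Phi)).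
Proof.
move=> _ hPP _ mPhi mPsi mh L0 mL w0 mw wint B0 [g Gg hg].
exact: (@final R dX dR dY X Rsp Y PT Px Py Phi Psi h L w mPhi mPsi w0 mw wint hPP mh L0 mL B B0 g hg G Gg).
Qed.
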